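(* Let $\mathcal{G}$ be a reaction network with species $X_1,\dots,X_n$ and reactions $\mathbf{y}\to\mathbf{y}'$ ($\mathbf{y},\mathbf{y}'\in\mathbb{Z}^n_{\ge 0}$, $\mathbf{y}\neq\mathbf{y}'$). For every choice of $n$ distinct reactions $\mathbf{y}_1\to\mathbf{y}'_1,\dots,\mathbf{y}_n\to\mathbf{y}'_n$ of $\mathcal{G}$ consider the number $$P=\det(\mathbf{y}_1,\dots,\mathbf{y}_n)\,\det(\mathbf{y}'_1-\mathbf{y}_1,\dots,\mathbf{y}'_n-\mathbf{y}_n),$$ where the determinants are of the $n\times n$ matrices with the indicated columns. Then $\mathcal{G}$ is injective if and only if all such numbers $P$ that are nonzero have the same sign and at least one of them is nonzero.
   Context: A reaction network with species $X_1,\dots,X_n$ is a finite set of reactions $\mathbf{y}\to\mathbf{y}'$ with $\mathbf{y}\ne\mathbf{y}'\in\mathbb{Z}^n_{\ge0}$ (the vectors of stoichiometric coefficients of reactants and products). Given rate constants $\mathbf{k}=(k_{\mathbf{y}\to\mathbf{y}'})$, all positive, the mass-action vector field is $\mathbf{f}(\mathbf{x},\mathbf{k})=\sum_{\mathbf{y}\to\mathbf{y}'}k_{\mathbf{y}\to\mathbf{y}'}\mathbf{x}^{\mathbf{y}}(\mathbf{y}'-\mathbf{y})$ for $\mathbf{x}\in\mathbb{R}^n_{>0}$, where $\mathbf{x}^{\mathbf{y}}=x_1^{y_1}\cdots x_n^{y_n}$. The network is called injective if for every choice of positive rate constants $\mathbf{k}$ the map $\mathbf{x}\mapsto\mathbf{f}(\mathbf{x},\mathbf{k})$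 is injective on $\mathbb{R}^n_{>0}$. *)

(* Defs.v *)
From HB Require Import structures.
From mathcomp Require Import all_boot all_order all_algebra.
From mathcomp Require Import reals.
Set Implicit Arguments. Unset Strict Implicit. Unset Printing Implicit Defensive.
Import Order.TTheory GRing.Theory Num.Theory.
Local Open Scope ring_scope.

(* A reaction y -> y' on n species: pair (reactant vector y, product vector y'),
   vectors in Z_{>=0}^n represented as row vectors of naturals. *)
Definition reaction (n : nat) := ('rV[nat]_n * 'rV[nat]_n)%type.

(* A reaction network with m reactions: an injective family G : 'I_m -> reaction n
   (i.e. a finite set of m reactions) with y != y' for each reaction. *)
Definition is_network (n m : nat) (G : 'I_m -> reaction n) : Prop :=
  injective G /\ forall r, (G r).1 != (G r).2.

Definition monom (R : comNzRingType) (n : nat) (x : 'rV[R]_n) (y : 'rV[nat]_n) : R :=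
  \prod_(j < n) x 0 j ^+ y 0 j.

Definition rvec (R : comNzRingType) (n : nat) (r : reaction n) : 'rV[R]_n :=
  \row_j ((r.2 0 j)%:R - (r.1 0 j)%:R).

Definition mass_action (R : comNzRingType) (n m : nat) (G : 'I_m -> reaction n)
  (k : 'I_m -> R) (x : 'rV[R]_n) : 'rV[R]_n :=
  \sum_(r < m) (k r * monom x (G r).1) *: @rvec R n (G r).

Definition pos_orthant (R : realType) (n : nat) : pred 'rV[R]_n :=
  [pred x : 'rV[R]_n | [forall j : 'I_n, 0 < x 0 j]].

Definition injective_network (R : realType) (n m : nat) (G : 'I_m -> reaction n)
  : Prop :=
  forall k : 'I_m -> R, (forall r, 0 < k r) ->
    {in @pos_orthant R n &, injective (@mass_action R n m G k)}.

Definition Pdet (n m : nat) (G : 'I_m -> reaction n) (s : 'I_n -> 'I_m) : int :=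
  \det (\matrix_(i < n, j < n) ((G (s j)).1 0 i)%:Z)
  * \det (\matrix_(i < n, j < n) (@rvec int n (G (s j)) 0 i)).

(* Main.v *)
Require Import Defs.
From HB Require Import structures.
From mathcomp Require Import all_boot all_order all_algebra.
From mathcomp Require Import fingroup perm.
From mathcomp Require Import reals ring lra.
From mathcomp.analysis Require Import sequences exp.
Import Order.TTheory GRing.Theory Num.Theory.
Set Implicit Arguments. Unset Strict Implicit. Unset Printing Implicit Defensive.
Local Open Scope ring_scope.

Section PdetLemmas.
Variables (n m : nat) (G : 'I_m -> reaction n).

Lemma eq_Pdet (s t : 'I_n -> 'I_m) : s =1 t -> Pdet G s = Pdet G t.
Proof.
move=> st; rewrite /Pdet; congr (_ * _); f_equal; apply/matrixP => i j;
  by rewrite !mxE st.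
Qed.

Lemma Pdet_inj (s : 'I_n -> 'I_m) : Pdet G s != 0 -> injective s.
Proof.
move=> nz i j sij; apply/eqP; apply: contraNT nz => ij.
rewrite /Pdet -det_tr (@determinant_alternate _ _ _ i j) ?mul0r //.
by move=> k; rewrite !mxE sij.
Qed.

Lemma det_colperm (R : comPzRingType) (A : 'M[R]_n) (s : {perm 'I_n}) :
  \det (\matrix_(i, j) A i (s j)) = (-1) ^+ s * \det A.
Proof.
have -> : \matrix_(i, j) A i (s j) = col_perm s A by apply/matrixP => i j; rewrite !mxE.
by rewrite col_permE det_mulmx det_perm odd_permV mulrC.
Qed.

Lemma Pdet_perm (s : 'I_n -> 'I_m) (p : {perm 'I_n}) :
  Pdet G (fun j => s (p j)) = Pdet G s.
Proof.
rewrite /Pdet.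
have E1 : \matrix_(i, j) ((G (s (p j))).1 0 i)%:Z =
   \matrix_(i, j) (\matrix_(i, j) ((G (s j)).1 0 i)%:Z) i (p j)
  by apply/matrixP => i j; rewrite !mxE.
have E2 : \matrix_(i, j) (@rvec int n (G (s (p j))) 0 i) =
   \matrix_(i, j) (\matrix_(i, j) (@rvec int n (G (s j)) 0 i)) i (p j)
  by apply/matrixP => i j; rewrite !mxE.
rewrite E1 E2 !det_colperm.
by rewrite mulrACA -expr2 sqrr_sign mul1r.
Qed.

End PdetLemmas.
Section Expansion.
Variables (R : comNzRingType) (n m : nat) (G : 'I_m -> reaction n).

Definition Amx (w : 'I_m -> R) : 'M[R]_(n, m) :=
  \matrix_(i, r) (w r * ((G r).1 0 i)%:R).
Definition Bmx : 'M[R]_(m, n) := \matrix_(r, j) (@rvec R n (G r) 0 j).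
Definition Fsum (w : 'I_m -> R) : R :=
  \sum_(f : {ffun 'I_n -> 'I_m}) (\prod_i w (f i)) * (Pdet G f)%:~R.

Lemma Pdet_R (t : 'I_n -> 'I_m) :
  (Pdet G t)%:~R = \det (\matrix_(i, j) ((G (t j)).1 0 i)%:R : 'M[R]_n)
                 * \det (\matrix_(i, j) (@rvec R n (G (t j)) 0 i)).
Proof.
rewrite /Pdet rmorphM /= -!det_map_mx; congr (_ * _); f_equal;
  apply/matrixP => i j; rewrite !mxE //.
by rewrite rmorphB /= !rmorph_nat.
Qed.

Lemma det_mulmx_gen (A : 'M[R]_(n, m)) (B : 'M[R]_(m, n)) :
  \det (A *m B) = \sum_(f : {ffun 'I_n -> 'I_m})
     (\prod_i A i (f i)) * \det (\matrix_(i, j) B (f i) j).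
Proof.
rewrite /determinant.
transitivity (\sum_(s : 'S_n) \sum_(f : {ffun 'I_n -> 'I_m})
   (-1) ^+ s * ((\prod_i A i (f i)) * \prod_i B (f i) (s i))).
  apply: eq_bigr => s _; rewrite -big_distrr /=; congr (_ * _).
  under eq_bigr do rewrite mxE.
  rewrite bigA_distr_bigA /=; apply: eq_bigr => f _; by rewrite big_split.
rewrite exchange_big; apply: eq_bigr => f _ /=; rewrite big_distrr /=.
apply: eq_bigr => s _; rewrite mulrCA; congr (_ * (_ * _)).
by apply: eq_bigr => i _; rewrite mxE.
Qed.

Lemma det_rowperm (A : 'M[R]_n) (s : {perm 'I_n}) :
  \det (\matrix_(i, j) A (s i) j) = (-1) ^+ s * \det A.
Proof.
have -> : \matrix_(i, j) A (s i) j = row_perm s A by apply/matrixP => i j; rewrite !mxE.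
by rewrite row_permE det_mulmx det_perm.
Qed.

Lemma expansion (w : 'I_m -> R) :
  n`!%:R * \det (Amx w *m Bmx) = Fsum w.
Proof.
pose T (g : {ffun 'I_n -> 'I_m}) := (\prod_i w (g i)) *
   ((\prod_i ((G (g i)).1 0 i)%:R) * \det (\matrix_(i, j) Bmx (g i) j)).
have E1 : \det (Amx w *m Bmx) = \sum_g T g.
  rewrite det_mulmx_gen; apply: eq_bigr => g _.
  rewrite /T mulrA -big_split /=; congr (_ * _).
  by apply: eq_bigr => i _; rewrite mxE.
have E2 : Fsum w = \sum_(s : 'S_n) \sum_g T g.
  rewrite /Fsum.
  transitivity (\sum_(f : {ffun 'I_n -> 'I_m}) \sum_(s : 'S_n)
    (\prod_i w (f i)) * ((-1) ^+ s * (\prod_i ((G (f (s i))).1 0 i)%:R)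
        * \det (\matrix_(i, j) Bmx (f i) j))).
    apply: eq_bigr => f _; rewrite -big_distrr /=; congr (_ * _).
    have EV : \det (\matrix_(i, j) (@rvec R n (G (f j)) 0 i))
         = \det (\matrix_(i, j) Bmx (f i) j).
      rewrite -det_tr; f_equal; by apply/matrixP => i j; rewrite !mxE.
    rewrite Pdet_R EV.
    rewrite -big_distrl /= /determinant; congr (_ * _).
    apply: eq_bigr => s _; congr (_ * _); apply: eq_bigr => i _; by rewrite !mxE.
  rewrite exchange_big; apply: eq_bigr => s _ /=.
  pose h (g : {ffun 'I_n -> 'I_m}) := [ffun i => g ((s^-1)%g i)].
  have hinj : injective h.
    move=> g1 g2 /ffunP e; apply/ffunP => i.
    by have := e (s i); rewrite !ffunE permK.
  rewrite (reindex_inj hinj); apply: eq_bigr => g _.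
  rewrite /T /h.
  have -> : \prod_i w ([ffun i0 => g ((s^-1)%g i0)] i) = \prod_i w (g i).
    rewrite (reindex_perm s); apply: eq_bigr => i _; by rewrite ffunE permK.
  have -> : \prod_i ((G ([ffun i0 => g ((s^-1)%g i0)] (s i))).1 0 i)%:R
            = \prod_i ((G (g i)).1 0 i)%:R :> R.
    by apply: eq_bigr => i _; rewrite ffunE permK.
  have -> : \matrix_(i, j) Bmx ([ffun i0 => g ((s^-1)%g i0)] i) j =
       \matrix_(i, j) (\matrix_(i, j) Bmx (g i) j) ((s^-1)%g i) j.
    by apply/matrixP => i j; rewrite !mxE ffunE.
  rewrite det_rowperm odd_permV; congr (_ * _).
  by rewrite mulrACA -expr2 sqrr_sign mul1r.
rewrite E2 E1 sumr_const card_Sn mulr_natl //.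
Qed.

End Expansion.
Section Signs.
Variables (R : realType) (n m : nat) (G : 'I_m -> reaction n).
Local Notation F := (@Fsum R n m G).

Lemma eq_Fsum (w w' : 'I_m -> R) : w =1 w' -> F w = F w'.
Proof.
by move=> e; apply: eq_bigr => f _; congr (_ * _); apply: eq_bigr => i _; rewrite e.
Qed.

Lemma sgz_mul_ge0 (a b : int) : (b != 0 -> sgz a = sgz b) -> 0 <= sgz a * b.
Proof.
move=> H; case: (eqVneq b 0) => [->|nb]; first by rewrite mulr0.
rewrite (H nb); case: (ltrgt0P b) => hb.
- by rewrite gtr0_sgz // mul1r ltW.
- by rewrite ltr0_sgz // mulN1r oppr_ge0 ltW.
- by move: nb; rewrite hb eqxx.
Qed.

Lemma sgz_mul_gt0 (a : int) : a != 0 -> 0 < sgz a * a.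
Proof.
move=> na; case: (ltrgt0P a) => ha.
- by rewrite gtr0_sgz // mul1r.
- by rewrite ltr0_sgz // mulN1r oppr_gt0.
- by move: na; rewrite ha eqxx.
Qed.

Lemma prod_gt0 (w : 'I_m -> R) (f : {ffun 'I_n -> 'I_m}) :
  (forall r, 0 < w r) -> 0 < \prod_i w (f i).
Proof. by move=> wp; apply: prodr_gt0 => i _. Qed.

Lemma Fsum_sign (s0 : 'I_n -> 'I_m) (w : 'I_m -> R) :
  (forall r, 0 < w r) -> Pdet G s0 != 0 ->
  (forall t : 'I_n -> 'I_m, injective t -> Pdet G t != 0 ->
     sgz (Pdet G s0) = sgz (Pdet G t)) ->
  0 < (sgz (Pdet G s0))%:~R * F w.
Proof.
move=> wp ns0 sg.
rewrite /Fsum mulr_sumr.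
have term : forall f : {ffun 'I_n -> 'I_m},
  (sgz (Pdet G s0))%:~R * ((\prod_i w (f i)) * (Pdet G f)%:~R) =
  (\prod_i w (f i)) * (sgz (Pdet G s0) * Pdet G f)%:~R.
  by move=> f; rewrite mulrCA intrM.
under eq_bigr do rewrite term.
pose fs := [ffun i => s0 i].
have Efs : Pdet G fs = Pdet G s0 by apply: eq_Pdet => i; rewrite ffunE.
rewrite (bigD1 fs) //=.
have h1 : 0 < \prod_i w (fs i) * (sgz (Pdet G s0) * Pdet G fs)%:~R.
  by rewrite mulr_gt0 ?prod_gt0 // ltr0z Efs sgz_mul_gt0.
have h2 : 0 <= \sum_(f : {ffun 'I_n -> 'I_m} | f != fs)
    \prod_i w (f i) * (sgz (Pdet G s0) * Pdet G f)%:~R.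
  apply: sumr_ge0 => f _; apply: mulr_ge0; first exact/ltW/prod_gt0.
  rewrite ler0z.
  apply: sgz_mul_ge0 => nf. have := sg (fun i => f i) (Pdet_inj nf) nf. exact.
lra.
Qed.

Lemma Pdet_allin (s : 'I_n -> 'I_m) (f : {ffun 'I_n -> 'I_m}) :
  injective s -> (forall i, f i \in codom s) ->
  Pdet G f = 0 \/ Pdet G f = Pdet G s.
Proof.
move=> sinj H; case: (eqVneq (Pdet G f) 0) => [->|nf]; [by left | right].
have finj := Pdet_inj nf.
pose g i := iinv (H i).
have ginj : injective g.
  move=> i j e; apply: finj; rewrite -(f_iinv (H i)) -(f_iinv (H j)).
  by congr (s _); exact: e.
rewrite -(@Pdet_perm n m G s (perm ginj)); apply: eq_Pdet => i.
by rewrite permE /g f_iinv.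
Qed.

Lemma Fsum_ex (s : 'I_n -> 'I_m) :
  Pdet G s != 0 -> exists w : 'I_m -> R,
    (forall r, 0 < w r) /\ 0 < (Pdet G s)%:~R * F w.
Proof.
move=> ns; have sinj := Pdet_inj ns.
pose p : R := (Pdet G s)%:~R.
have pn : p != 0 by rewrite intr_eq0.
have p2 : 0 < p * p by rewrite -expr2 exprn_even_gt0.
pose fs := [ffun i => s i].
have Efs : Pdet G fs = Pdet G s by apply: eq_Pdet => i; rewrite ffunE.
pose K := \sum_(f : {ffun 'I_n -> 'I_m}) `|p * (Pdet G f)%:~R|.
have Kge : p * p <= K.
  rewrite /K (bigD1 fs) //= Efs -/p.
  have : 0 <= \sum_(f : {ffun 'I_n -> 'I_m} | f != fs) `|p * (Pdet G f)%:~R| by apply: sumr_ge0.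
  have : p * p <= `|p * p| by apply: ler_norm.
  lra.
have Kpos : 0 < K by lra.
pose e := p * p / (K *+ 2).
have e_gt0 : 0 < e by rewrite divr_gt0 // pmulrn_lgt0.
have e_le1 : e <= 1.
  rewrite ler_pdivrMr ?pmulrn_lgt0 // mul1r mulr2n; lra.
have eK : e * K = p * p / 2.
  have K0 : K != 0 by rewrite gt_eqF.
  by rewrite /e -mulr_natr; field.
pose w r := if r \in codom s then 1 else e.
have wp : forall r, 0 < w r by move=> r; rewrite /w; case: ifP.
have w1 : forall r, w r <= 1 by move=> r; rewrite /w; case: ifP.
exists w; split => //.
rewrite /Fsum mulr_sumr -/p.
have term : forall f : {ffun 'I_n -> 'I_m},
  p * ((\prod_i w (f i)) * (Pdet G f)%:~R) =
  (\prod_i w (f i)) * (p * (Pdet G f)%:~R).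
  by move=> f; rewrite mulrCA.
under eq_bigr do rewrite term.
rewrite (bigID (fun f : {ffun 'I_n -> 'I_m} => [forall i, f i \in codom s])) /=.
have part1 : p * p <= \sum_(f : {ffun 'I_n -> 'I_m} | [forall i, f i \in codom s])
                 (\prod_i w (f i)) * (p * (Pdet G f)%:~R).
  have fsin : [forall i, fs i \in codom s].
    by apply/forallP => i; rewrite ffunE codom_f.
  rewrite (bigD1 fs) //=.
  have Wfs : \prod_i w (fs i) = 1.
    by apply: big1 => i _; rewrite /w ffunE codom_f.
  rewrite Wfs mul1r Efs -/p.
  have : 0 <= \sum_(f : {ffun 'I_n -> 'I_m} | [forall i, f i \in codom s] && (f != fs))
      \prod_i w (f i) * (p * (Pdet G f)%:~R).
    apply: sumr_ge0 => f /andP[/forallP fin _].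
    have Wf : \prod_i w (f i) = 1 by apply: big1 => i _; rewrite /w fin.
    rewrite Wf mul1r.
    by case: (Pdet_allin sinj fin) => ->; rewrite ?mulr0 // -/p -expr2 sqr_ge0.
  lra.
have part2 : - (e * K) <= \sum_(f : {ffun 'I_n -> 'I_m} | ~~ [forall i, f i \in codom s])
                 (\prod_i w (f i)) * (p * (Pdet G f)%:~R).
  have Ksplit : \sum_(f : {ffun 'I_n -> 'I_m} | ~~ [forall i, f i \in codom s]) `|p * (Pdet G f)%:~R| <= K.
    rewrite /K [X in _ <= X](bigID (fun f : {ffun 'I_n -> 'I_m} => [forall i, f i \in codom s])) /=.
    have : 0 <= \sum_(f : {ffun 'I_n -> 'I_m} | [forall i, f i \in codom s]) `|p * (Pdet G f)%:~R|
      by apply: sumr_ge0.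
    lra.
  have : - (e * \sum_(f : {ffun 'I_n -> 'I_m} | ~~ [forall i, f i \in codom s]) `|p * (Pdet G f)%:~R|)
         <= \sum_(f : {ffun 'I_n -> 'I_m} | ~~ [forall i, f i \in codom s])
                 (\prod_i w (f i)) * (p * (Pdet G f)%:~R).
    rewrite mulr_sumr -sumrN; apply: ler_sum => f.
    rewrite negb_forall => /existsP[i0 ni0].
    have W0 : 0 < \prod_i w (f i) by apply: prod_gt0.
    have We : \prod_i w (f i) <= e.
      rewrite (bigD1 i0) //= {1}/w (negPf ni0).
      rewrite -[leRHS]mulr1; apply: ler_wpM2l; first exact: ltW.
      by apply: prodr_ile1 => i _; rewrite (ltW (wp _)) w1.
    set x := p * (Pdet G f)%:~R.
    have /andP[h3 h4] : - `|x| <= x <= `|x| by rewrite -ler_norml.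
    have := normr_ge0 x.
    nra.
  have := normr_ge0 e; nra.
lra.
Qed.

Lemma Fsum_ivt (w1 w2 : 'I_m -> R) :
  (forall r, 0 < w1 r) -> (forall r, 0 < w2 r) ->
  F w1 <= 0 <= F w2 -> exists w : 'I_m -> R, (forall r, 0 < w r) /\ F w = 0.
Proof.
move=> p1 p2 hF.
pose q : {poly R} := \sum_(f : {ffun 'I_n -> 'I_m})
  (\prod_i ((1 - 'X) * (w1 (f i))%:P + 'X * (w2 (f i))%:P)) * ((Pdet G f)%:~R)%:P.
have qE : forall x, q.[x] = F (fun r => (1 - x) * w1 r + x * w2 r).
  move=> x; rewrite horner_sum; apply: eq_bigr => f _.
  rewrite hornerM hornerC horner_prod; congr (_ * _).
  by apply: eq_bigr => i _; rewrite !hornerE.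
have q0 : q.[0] = F w1 by rewrite qE; apply: eq_Fsum => r; rewrite subr0 mul1r mul0r addr0.
have q1 : q.[1] = F w2 by rewrite qE; apply: eq_Fsum => r; rewrite subrr mul0r mul1r add0r.
have hq : q.[0] <= 0 <= q.[1] by rewrite q0 q1.
have [x /andP[x0 x1] rx] := @poly_ivt R q 0 1 ler01 hq.
exists (fun r => (1 - x) * w1 r + x * w2 r); split.
  by move=> r; have := p1 r; have := p2 r; nra.
by rewrite -qE; apply/eqP.
Qed.

Lemma signs_iff :
  (forall w : 'I_m -> R, (forall r, 0 < w r) -> F w != 0) <->
  ((forall s t : 'I_n -> 'I_m, injective s -> injective t ->
       Pdet G s != 0 -> Pdet G t != 0 -> sgz (Pdet G s) = sgz (Pdet G t)) /\
    (exists s : 'I_n -> 'I_m, injective s /\ Pdet G s != 0)).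
Proof.
split.
  move=> H; split.
    move=> s t _ _ ns nt.
    have [w1 [p1 h1]] := Fsum_ex ns.
    have [w2 [p2 h2]] := Fsum_ex nt.
    have hw1 := H _ p1; have hw2 := H _ p2.
    case: (ltrgt0P (Pdet G s)) => hs; last by move: ns; rewrite hs eqxx.
    - case: (ltrgt0P (Pdet G t)) => ht; last by move: nt; rewrite ht eqxx.
      + by rewrite !gtr0_sgz.
      + have f1 : 0 < F w1 by rewrite -(pmulr_rgt0 _ (_ : 0 < (Pdet G s)%:~R)) ?ltr0z.
        have f2 : F w2 < 0 by rewrite -(nmulr_rgt0 _ (_ : (Pdet G t)%:~R < 0)) ?ltrz0.
        have [w [pw /eqP]] := Fsum_ivt p2 p1 (ltac:(by rewrite !ltW)).
        by rewrite (negPf (H _ pw)).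
    - case: (ltrgt0P (Pdet G t)) => ht; last by move: nt; rewrite ht eqxx.
      + have f1 : F w1 < 0 by rewrite -(nmulr_rgt0 _ (_ : (Pdet G s)%:~R < 0)) ?ltrz0.
        have f2 : 0 < F w2 by rewrite -(pmulr_rgt0 _ (_ : 0 < (Pdet G t)%:~R)) ?ltr0z.
        have [w [pw /eqP]] := Fsum_ivt p1 p2 (ltac:(by rewrite !ltW)).
        by rewrite (negPf (H _ pw)).
      + by rewrite !ltr0_sgz.
  case: (pickP (fun f : {ffun 'I_n -> 'I_m} => Pdet G f != 0)) => [f nf | none].
    by exists (fun i => f i); split => //; apply: Pdet_inj nf.
  have := H (fun _ => 1) (fun _ => ltr01).
  rewrite /Fsum big1 ?eqxx // => f _.
  by move: (none f) => /negbFE/eqP ->; rewrite mulr0.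
move=> [sg [s0 [_ ns0]]] w wp.
have := Fsum_sign wp ns0 (fun t ti nt => sg s0 t (Pdet_inj ns0) ti ns0 nt).
by apply: contraTneq => ->; rewrite mulr0 ltxx.
Qed.

End Signs.
Section Analytic.
Variables (R : realType) (n m : nat) (G : 'I_m -> reaction n).

Definition ay (d : 'rV[R]_n) (r : 'I_m) : R := \sum_j d 0 j * ((G r).1 0 j)%:R.
Definition cf (a : R) : R := if a == 0 then 1 else (expR a - 1) / a.

Lemma cf_gt0 a : 0 < cf a.
Proof.
rewrite /cf; case: eqVneq => [_|a0]; first exact: ltr01.
case: (ltrgt0P a) => ha.
- by rewrite divr_gt0 // subr_gt0 expR_gt1.
- by rewrite -mulrNN -invrN opprB divr_gt0 ?oppr_gt0 // subr_gt0 expR_lt1.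
- by move: a0; rewrite ha eqxx.
Qed.

Lemma cfE a : expR a - 1 = cf a * a.
Proof.
rewrite /cf; case: eqVneq => [->|a0]; first by rewrite expR0 subrr mulr0.
by rewrite divfK.
Qed.

Lemma Lmul (w : 'I_m -> R) (d : 'rV[R]_n) :
  d *m (@Amx R n m G w *m @Bmx R n m G) = \sum_r (w r * ay d r) *: @rvec R n (G r).
Proof.
rewrite mulmxA mulmx_sum_row; apply: eq_bigr => r _; congr (_ *: _).
  rewrite !mxE /ay mulr_sumr; apply: eq_bigr => j _; by rewrite mxE mulrCA.
by apply/rowP => j; rewrite !mxE.
Qed.

Lemma monom_exp (x d : 'rV[R]_n) (y : 'rV[nat]_n) :
  monom (\row_j (x 0 j * expR (d 0 j))) y = monom x y * expR (\sum_j d 0 j * (y 0 j)%:R).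
Proof.
rewrite /monom expR_sum -big_split; apply: eq_bigr => j _.
by rewrite mxE exprMn expRM_natr.
Qed.

Lemma monom1 (y : 'rV[nat]_n) : monom (\row_j (1 : R)) y = 1.
Proof. by apply: big1 => j _; rewrite mxE expr1n. Qed.

Lemma monom_gt0 (x : 'rV[R]_n) y : (forall j, 0 < x 0 j) -> 0 < monom x y.
Proof. by move=> xp; apply: prodr_gt0 => j _; apply: exprn_gt0. Qed.

Lemma pos_orthantP (x : 'rV[R]_n) : x \in @pos_orthant R n -> forall j, 0 < x 0 j.
Proof. by rewrite inE => /forallP. Qed.

Lemma A1 : (forall w : 'I_m -> R, (forall r, 0 < w r) ->
              \det (@Amx R n m G w *m @Bmx R n m G) != 0) ->
           injective_network R G.
Proof.
move=> H k kp x x' xp x'p e.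
have xj := pos_orthantP xp; have x'j := pos_orthantP x'p.
pose d : 'rV[R]_n := \row_j (ln (x' 0 j) - ln (x 0 j)).
have Ex' : x' = \row_j (x 0 j * expR (d 0 j)).
  apply/rowP => j; rewrite !mxE expRB !lnK ?posrE //.
  by rewrite mulrCA divff ?mulr1 // gt_eqF.
pose w r := k r * monom x (G r).1 * cf (ay d r).
have wp : forall r, 0 < w r.
  by move=> r; rewrite /w mulr_gt0 ?cf_gt0 // mulr_gt0 ?kp // monom_gt0.
have dL : d *m (@Amx R n m G w *m @Bmx R n m G) = 0.
  rewrite Lmul.
  transitivity (mass_action G k x' - mass_action G k x); last by rewrite e subrr.
  rewrite /mass_action -sumrB; apply: eq_bigr => r _; rewrite -scalerBl; congr (_ *: _).
  rewrite Ex' monom_exp /w -/(ay d r).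
  transitivity (k r * monom x (G r).1 * (expR (ay d r) - 1)).
    by rewrite cfE mulrA.
  by rewrite mulrBr mulr1 mulrA.
have d0 : d = 0.
  case: (eqVneq d 0) => // dn.
  have /negP := H w wp; case; apply/det0P; by exists d.
apply/rowP => j.
have := congr1 (fun M : 'rV[R]_n => M 0 j) d0; rewrite !mxE => /eqP; rewrite subr_eq0 => /eqP h.
by apply: (ln_inj _ _ (esym h)); rewrite posrE.
Qed.

Lemma A2 : injective_network R G ->
  forall w : 'I_m -> R, (forall r, 0 < w r) ->
    \det (@Amx R n m G w *m @Bmx R n m G) != 0.
Proof.
move=> Hinj w wp; apply/negP => /det0P [d dn dL].
pose x : 'rV[R]_n := \row_j 1.
pose x' : 'rV[R]_n := \row_j (x 0 j * expR (d 0 j)).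
pose k r := w r / cf (ay d r).
have kp : forall r, 0 < k r by move=> r; rewrite divr_gt0 ?cf_gt0.
have xp : x \in @pos_orthant R n by rewrite inE; apply/forallP => j; rewrite mxE ltr01.
have x'p : x' \in @pos_orthant R n.
  by rewrite inE; apply/forallP => j; rewrite !mxE mul1r expR_gt0.
have e : mass_action G k x = mass_action G k x'.
  apply/eqP; rewrite eq_sym -subr_eq0; apply/eqP.
  rewrite -dL Lmul /mass_action -sumrB; apply: eq_bigr => r _.
  rewrite -scalerBl; congr (_ *: _).
  rewrite /x' monom_exp /x monom1 -/(ay d r) mul1r -mulrBr cfE mulrA divfK //.
  by rewrite gt_eqF ?cf_gt0.
have := Hinj k kp x x' xp x'p e => /rowP exx'.
case/eqP: dn; apply/rowP => j; have := exx' j; rewrite !mxE mul1r => h.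
by apply: expR_inj; rewrite expR0 h.
Qed.

End Analytic.

Theorem corollary2p2 (R : realType) (n m : nat) (G : 'I_m -> reaction n) :
  is_network G ->
  (injective_network R G <->
   ((forall s t : 'I_n -> 'I_m, injective s -> injective t ->
       Pdet G s != 0 -> Pdet G t != 0 -> sgz (Pdet G s) = sgz (Pdet G t)) /\
    (exists s : 'I_n -> 'I_m, injective s /\ Pdet G s != 0))).
Proof.
move=> _; rewrite -(@signs_iff R n m G); split.
  move=> Hi w wp; rewrite -(@expansion R n m G w) mulf_neq0 ?(A2 Hi wp) //.
  by rewrite pnatr_eq0 -lt0n fact_gt0.
move=> HF; apply: A1 => w wp; have := HF w wp.
by rewrite -(@expansion R n m G w) mulf_eq0 negb_or => /andP[_ ->].
Qed.
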